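(* Let $a,b,p,q$ be positive real numbers and consider the system of difference equations $$y_{n+1}=\frac{a z_n}{p+z_n}e^{-y_n},\qquad z_{n+1}=\frac{b y_n}{q+y_n}e^{-z_n},\qquad n=0,1,2,\dots$$ with nonnegative initial values $y_0,z_0$. Then: (i) the system always has the zero equilibrium $(0,0)$; (ii) if $\frac{ab}{pq}>1$, then the system has a unique positive equilibrium.
   Context: An equilibrium of the system is a pair $(\bar y,\bar z)$ with $\bar y=\frac{a\bar z}{p+\bar z}e^{-\bar y}$ and $\bar z=\frac{b\bar y}{q+\bar y}e^{-\bar z}$; it is positive if $\bar y>0$ and $\bar z>0$. *)

(* Defs.v *)
From Stdlib Require Import Reals.
Open Scope R_scope.

Definition Fy (a p : R) (y z : R) : R := a * z / (p + z) * exp (- y).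
Definition Fz (b q : R) (y z : R) : R := b * y / (q + y) * exp (- z).

Definition is_equilibrium (a b p q : R) (y z : R) : Prop :=
  y = Fy a p y z /\ z = Fz b q y z.

Definition is_positive_equilibrium (a b p q : R) (y z : R) : Prop :=
  is_equilibrium a b p q y z /\ 0 < y /\ 0 < z.

(* Main.v *)
Require Import Defs.
From Stdlib Require Import Reals Lra Psatz Ranalysis5.
Open Scope R_scope.

Lemma gmono u v : 0 <= u -> u < v -> u * exp u < v * exp v.
Proof.
  intros Hu Huv. pose proof (exp_increasing u v Huv). pose proof (exp_pos u). nra.
Qed.

Lemma eq_to_P (a b p q y z : R) : 0 < a -> 0 < b -> 0 < p -> 0 < q ->
  is_positive_equilibrium a b p q y z ->
  y * exp y * (p + z) = a * z /\ (p + z) * (q + y) * exp (y + z) = a * b.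
Proof.
  intros ha hb hp hq [[E1 E2] [hy hz]]. unfold Fy, Fz in *.
  assert (ey : exp y * exp (- y) = 1) by (rewrite <- exp_plus; replace (y + - y) with 0 by ring; apply exp_0).
  assert (ez : exp z * exp (- z) = 1) by (rewrite <- exp_plus; replace (z + - z) with 0 by ring; apply exp_0).
  assert (P1 : y * exp y * (p + z) = a * z).
  { rewrite E1 at 1. field_simplify; [|lra]. rewrite Rmult_assoc, (Rmult_comm (exp (-y))), ey. field. }
  split; auto.
  assert (P2 : z * exp z * (q + y) = b * y).
  { rewrite E2 at 1. field_simplify; [|lra]. rewrite Rmult_assoc, (Rmult_comm (exp (-z))), ez. field. }
  rewrite exp_plus.
  apply Rmult_eq_reg_l with (y * z); [|nra].
  transitivity ((y * exp y * (p + z)) * (z * exp z * (q + y))); [ring|].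
  rewrite P1, P2; ring.
Qed.

Lemma P_unique (a b p q y z y' z' : R) : 0 < a -> 0 < b -> 0 < p -> 0 < q ->
  0 < y -> 0 < z -> 0 < y' -> 0 < z' ->
  y * exp y * (p + z) = a * z -> (p + z) * (q + y) * exp (y + z) = a * b ->
  y' * exp y' * (p + z') = a * z' -> (p + z') * (q + y') * exp (y' + z') = a * b ->
  y' = y /\ z' = z.
Proof.
  intros ha hb hp hq hy hz hy' hz' A1 A2 B1 B2.
  assert (gen : forall u v u' v', 0 < u -> 0 < v -> 0 < u' -> 0 < v' -> u < u' ->
     u * exp u * (p + v) = a * v -> u' * exp u' * (p + v') = a * v' -> v < v').
  { intros u v u' v' hu hv hu' hv' huu C1 C2.
    pose proof (gmono u u' ltac:(lra) huu).
    destruct (Rlt_or_le v v') as [|Hle]; auto. exfalso.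
    (* a v/(p+v) = g u < g u' = a v'/(p+v') *)
    assert (a * v * (p + v') - a * v' * (p + v) = (a * p) * (v - v')) by ring.
    assert (0 < a * p) by nra.
    assert (a * v * (p + v') >= a * v' * (p + v)) by nra.
    set (gu := u * exp u) in *. set (gu' := u' * exp u') in *.
    assert (gu * (p+v) * (p+v') < gu' * (p+v) * (p+v')) by (apply Rmult_lt_compat_r; [lra|]; apply Rmult_lt_compat_r; lra).
    nra. }
  assert (gen2 : forall u v u' v', 0 < u -> 0 < v -> u < u' -> v < v' ->
     (p + v) * (q + u) * exp (u + v) < (p + v') * (q + u') * exp (u' + v')).
  { intros u v u' v' hu hv huu hvv.
    pose proof (exp_increasing (u+v) (u'+v') ltac:(lra)). pose proof (exp_pos (u+v)).
    assert ((p+v)*(q+u) < (p+v')*(q+u')) by (apply Rmult_le_0_lt_compat; lra).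
    apply Rmult_le_0_lt_compat; try lra. nra. }
  destruct (Rtotal_order y y') as [H|[H|H]].
  - pose proof (gen _ _ _ _ hy hz hy' hz' H A1 B1). pose proof (gen2 _ _ _ _ hy hz H H0). lra.
  - subst y'. split; auto.
    assert (C : a * z * (p + z') = a * z' * (p + z)).
    { rewrite <- A1, <- B1. ring. }
    assert (a * p * (z - z') = 0) by nra.
    assert (a * p <> 0) by nra.
    apply Rmult_integral in H. destruct H; [lra|lra].
  - pose proof (gen _ _ _ _ hy' hz' hy hz H B1 A1). pose proof (gen2 _ _ _ _ hy' hz' H H0). lra.
Qed.

Theorem theorem3p1 (a b p q : R) (ha : 0 < a) (hb : 0 < b) (hp : 0 < p) (hq : 0 < q) :
  is_equilibrium a b p q 0 0 /\
  (a * b / (p * q) > 1 ->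
   exists y z, is_positive_equilibrium a b p q y z /\
     forall y' z', is_positive_equilibrium a b p q y' z' -> y' = y /\ z' = z).
Proof.
  split.
  { unfold is_equilibrium, Fy, Fz. split; field; lra. }
  intros Hab.
  assert (Hab' : a * b > p * q).
  { apply Rmult_gt_compat_r with (r := p*q) in Hab; [|nra].
    unfold Rdiv in Hab. rewrite Rmult_assoc, Rinv_l in Hab; nra. }
  set (M := a * b / q + 1).
  assert (hM : 0 < M) by (unfold M; apply Rplus_lt_0_compat; [apply Rdiv_lt_0_compat; nra|lra]).
  set (c := a * M / (p + M)).
  assert (hc0 : 0 < c) by (unfold c; apply Rdiv_lt_0_compat; nra).
  assert (hca : c < a).
  { unfold c. apply Rmult_lt_reg_r with (p + M); [lra|].
    unfold Rdiv. rewrite Rmult_assoc, Rinv_l; nra. }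
  destruct (Ranalysis5.IVT_interv (fun y => y * exp y - c) 0 a) as [y1 [Hy1 Ey1]].
  { intros. reg. }
  { lra. }
  { rewrite exp_0. lra. }
  { pose proof (exp_ineq1 a ltac:(lra)). nra. }
  simpl in Ey1.
  assert (hy1 : 0 < y1).
  { destruct (Req_dec y1 0) as [E|]; [|lra]. rewrite E, exp_0 in Ey1. lra. }
  set (Z := fun y => p * (y * exp y) / (a - y * exp y)).
  set (K := fun y => (p + Z y) * (q + y) * exp (y + Z y) - a * b).
  assert (gle : forall y, 0 <= y <= y1 -> y * exp y <= c).
  { intros y Hy. destruct (Req_dec y y1) as [->|]; [lra|].
    pose proof (gmono y y1 ltac:(lra) ltac:(lra)). lra. }
  assert (Zy1 : Z y1 = M).
  { unfold Z. replace (y1 * exp y1) with c by lra.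
    assert (a - c = a * p / (p + M)) by (unfold c; field; lra).
    rewrite H. unfold c. field. split; lra. }
  assert (K0 : K 0 = p * q - a * b).
  { unfold K, Z. rewrite exp_0. replace (0*1) with 0 by ring.
    replace (p * 0 / (a - 0)) with 0 by (field; lra). rewrite !Rplus_0_r, exp_0. ring. }
  destruct (Ranalysis5.IVT_interv K 0 y1) as [y0 [Hy0 Ky0]].
  { intros y Hy. unfold K, Z. pose proof (gle y Hy). reg. lra. }
  { lra. }
  { rewrite K0. nra. }
  { unfold K. rewrite Zy1.
    pose proof (exp_pos (y1 + M)). assert (1 <= exp (y1 + M)).
    { pose proof (exp_ineq1_le (y1 + M)). lra. }
    assert ((p + M) * (q + y1) >= M * q) by nra.
    assert (M * q = a * b + q) by (unfold M; field; lra).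
    assert ((p + M) * (q + y1) * 1 <= (p + M) * (q + y1) * exp (y1 + M)) by (apply Rmult_le_compat_l; nra).
    lra. }
  assert (hy0 : 0 < y0).
  { destruct (Req_dec y0 0) as [E|]; [|lra]. exfalso. rewrite E, K0 in Ky0. nra. }
  pose proof (gle y0 Hy0) as g0.
  pose proof (exp_pos y0) as e0.
  assert (hg0 : 0 < y0 * exp y0) by nra.
  set (z0 := Z y0).
  assert (hz0 : 0 < z0) by (unfold z0, Z; apply Rdiv_lt_0_compat; nra).
  assert (Q1 : y0 * exp y0 * (p + z0) = a * z0).
  { unfold z0, Z. field. lra. }
  assert (Q2 : (p + z0) * (q + y0) * exp (y0 + z0) = a * b).
  { unfold K in Ky0. fold z0 in Ky0. lra. }
  assert (PE : is_positive_equilibrium a b p q y0 z0).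
  { split; [|lra]. unfold is_equilibrium, Fy, Fz. split.
    - assert (ey : exp y0 * exp (- y0) = 1) by (rewrite <- exp_plus; replace (y0 + - y0) with 0 by ring; apply exp_0).
      apply Rmult_eq_reg_l with (exp y0 * (p + z0)); [|nra].
      transitivity (a * z0 * (exp y0 * exp (- y0))).
      { rewrite ey, <- Q1. ring. }
      field. lra.
    - pose proof (exp_pos z0).
      assert (ez : exp z0 * exp (- z0) = 1) by (rewrite <- exp_plus; replace (z0 + - z0) with 0 by ring; apply exp_0).
      apply Rmult_eq_reg_l with (a * exp z0 * (q + y0)); [|apply Rgt_not_eq; apply Rmult_lt_0_compat; [apply Rmult_lt_0_compat|]; lra].
      rewrite exp_plus in Q2.
      transitivity (a * b * y0).
      { transitivity ((a * z0) * (exp z0 * (q + y0))); [ring|].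
        rewrite <- Q1, <- Q2. ring. }
      transitivity (a * b * y0 * (exp z0 * exp (- z0))); [rewrite ez; ring|].
      field. lra. }
  exists y0, z0. split; auto.
  intros y' z' H'. pose proof (eq_to_P _ _ _ _ _ _ ha hb hp hq H') as [B1 B2].
  destruct H' as [_ [hy' hz']].
  exact (P_unique a b p q y0 z0 y' z' ha hb hp hq hy0 hz0 hy' hz' Q1 Q2 B1 B2).
Qed.
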